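(* Let $d\ge1$ and let $P,Q\subset\mathbb{R}^d$ be finite point sets that are not $(1,\infty)$-separable. Then there exist $P^*\subseteq P$ and $Q^*\subseteq Q$ with $|P^*|+|Q^*|\le 2d+2$ such that $P^*$ and $Q^*$ are not $(1,\infty)$-separable. That is, $(1,\infty)$-separability has the Helly-type property with Helly number at most $2d+2$.
   Context: Finite sets $P,Q\subset\mathbb{R}^d$ are $(1,\infty)$-separable if $\mathrm{CH}(P)\cap Q=\emptyset$ or $P\cap\mathrm{CH}(Q)=\emptyset$, where $\mathrm{CH}$ denotes the convex hull (equivalently: one of the two sets can be covered by a single convex set and the other by arbitrarily many convex sets, with the two unions disjoint). *)

(* Defs.v *)
(* Points of R^d are row vectors 'rV[R]_d over an arbitrary
   real field R (the statement is stated for every realFieldType, which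
   includes the reals). Finite point sets are finmap {fset _}. *)
From HB Require Import structures.
From mathcomp Require Import all_boot all_order all_algebra.
From mathcomp Require Import finmap.
Set Implicit Arguments. Unset Strict Implicit. Unset Printing Implicit Defensive.
Import Order.TTheory GRing.Theory Num.Theory.
Local Open Scope ring_scope.
Local Open Scope fset_scope.

Definition in_conv_hull (R : realFieldType) (d : nat)
  (P : {fset 'rV[R]_d}) (x : 'rV[R]_d) : Prop :=
  exists w : 'rV[R]_d -> R,
    (forall p, p \in P -> 0 <= w p) /\
    \sum_(p <- P) w p = 1 /\
    x = \sum_(p <- P) w p *: p.

Definition sep_1_inf (R : realFieldType) (d : nat)
  (P Q : {fset 'rV[R]_d}) : Prop :=
  (forall q, q \in Q -> ~ in_conv_hull P q) \/
  (forall p, p \in P -> ~ in_conv_hull Q p).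

(* Main.v *)
Require Import Defs.
From HB Require Import structures.
From mathcomp Require Import all_boot all_order all_algebra.
From mathcomp Require Import finmap.
Local Open Scope ring_scope.
Local Open Scope fset_scope.
From mathcomp Require Import ring lra zify.
From Stdlib Require Classical.
Set Implicit Arguments. Unset Strict Implicit. Unset Printing Implicit Defensive.
Import Order.TTheory GRing.Theory Num.Theory.
Local Open Scope ring_scope.
Lemma dep (R : realFieldType) d (f : 'rV[R]_d -> 'rV[R]_d) (S : {fset 'rV[R]_d}) :
  (d < #|` S|)%N -> exists b : 'rV[R]_d -> R,
   \sum_(x <- S) b x *: f x = 0 /\ exists2 x, x \in S & b x != 0.
Proof.
move=> Hd.
set s := (S : seq _).
have us : uniq s by apply: fset_uniq.
have E : #|` S| = size s by []. rewrite E in Hd.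
pose n := size s.
pose A := \matrix_(i < n, j < d) f (nth 0 s i) 0 j.
have nf : ~~ row_free A.
  rewrite /row_free; apply/negP => /eqP H.
  have := rank_leq_col A; rewrite H => H2.
  by move: Hd; rewrite -/n ltnNge H2.
move: nf; rewrite -kermx_eq0 => /matrix0Pn [i [j Hij]].
pose v := row i (kermx A).
have Hv : v *m A = 0 by rewrite -row_mul mulmx_ker row0.
have key : forall k : 'I_n, \sum_(k' < n | nth 0 s k' == nth 0 s k) v 0 k' = v 0 k.
  move=> k; rewrite (big_pred1 k) // => k' /=.
  by rewrite nth_uniq.
exists (fun x => \sum_(k < n | nth 0 s k == x) v 0 k); split.
  rewrite (big_nth 0) big_mkord -/n.
  rewrite (eq_bigr (fun k => v 0 k *: row k A)); first by rewrite -mulmx_sum_row.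
  move=> k _; rewrite key; congr (_ *: _).
  by apply/rowP => l; rewrite !mxE.
exists (nth 0 s j); first by apply: mem_nth.
by rewrite key mxE.
Qed.
Lemma argmin (R : realFieldType) (T : eqType) (s : seq T) (a : pred T) (g : T -> R) :
  has a s -> exists x, [/\ x \in s, a x & forall y, y \in s -> a y -> g x <= g y].
Proof.
elim: s => [//|z s IH] /=.
case Hz: (a z) => /=.
  case Hs: (has a s).
    have [x [xs ax Hx]] := IH Hs.
    case: (leP (g z) (g x)) => H.
      exists z; split => //; first by rewrite inE eqxx.
      move=> y; rewrite inE => /orP [/eqP -> //| ys ay].
      by apply: le_trans H (Hx _ ys ay).
    exists x; split => //; first by rewrite inE xs orbT.
    move=> y; rewrite inE => /orP [/eqP -> _| ys ay]; last by apply: Hx.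
    by apply: ltW.
  exists z; split => //; first by rewrite inE eqxx.
  move=> y; rewrite inE => /orP [/eqP -> //| ys ay].
  by move/hasPn: Hs => /(_ _ ys); rewrite ay.
move=> Hs; have [x [xs ax Hx]] := IH Hs.
exists x; split => //; first by rewrite inE xs orbT.
move=> y; rewrite inE => /orP [/eqP -> | ys ay]; last by apply: Hx.
by rewrite Hz.
Qed.

Lemma pos_exists (R : realFieldType) (T : eqType) (s : seq T) (b : T -> R) :
  0 < \sum_(x <- s) b x -> exists2 x, x \in s & 0 < b x.
Proof.
move=> H; apply/hasP; apply/negPn/negP => /hasPn Hn.
have : \sum_(x <- s) b x <= 0.
  rewrite -oppr_ge0 -sumrN big_seq; apply: sumr_ge0 => x xs.
  by rewrite oppr_ge0 leNgt Hn.
by rewrite leNgt H.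
Qed.

Lemma sign_choice (R : realFieldType) d (f : 'rV[R]_d -> 'rV[R]_d) (S : {fset 'rV[R]_d}) :
  (d < #|`S|)%N -> exists b : 'rV[R]_d -> R,
  [/\ \sum_(x <- S) b x *: f x = 0, 0 <= \sum_(x <- S) b x & exists2 x, x \in S & 0 < b x].
Proof.
move=> /(dep f) [b [hb [x1 x1S bx1]]].
have hN : \sum_(x <- S) (- b x) *: f x = 0.
  rewrite (eq_bigr (fun x => - (b x *: f x))); first by rewrite sumrN hb oppr0.
  by move=> x _; rewrite scaleNr.
have sN : \sum_(x <- S) (- b x) = - \sum_(x <- S) b x by rewrite sumrN.
case: (ltgtP (\sum_(x <- S) b x) 0) => HB.
- exists (fun x => - b x); split => //; first by rewrite sN oppr_ge0 ltW.
  by apply: pos_exists; rewrite sN oppr_gt0.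
- exists b; split => //; first exact: ltW.
  exact: pos_exists.
- case: (ltgtP (b x1) 0) => Hx.
  + exists (fun x => - b x); split => //; first by rewrite sN HB oppr0.
    by exists x1 => //; rewrite oppr_gt0.
  + exists b; split => //; first by rewrite HB.
    by exists x1.
  + by move: bx1; rewrite Hx eqxx.
Qed.

Lemma cara (R : realFieldType) d (P : {fset 'rV[R]_d}) p q :
  p \in P -> in_conv_hull P q ->
  exists P', [/\ P' `<=` P, p \in P', (#|` P'| <= d.+1)%N & in_conv_hull P' q].
Proof.
have [n Hn] : exists n, (#|` P| <= n)%N by exists #|` P|.
elim: n P Hn => [|n IH] P Hn hp hq.
  by exists P; split => //; apply: leq_trans Hn _.
case: (leqP #|` P| d.+1) => Hc; first by exists P.
have cP := cardfsD1 p P; rewrite hp in cP.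
have [b [hb hB [x1 x1S bx1]]] := sign_choice (fun x => x - p) (S := P `\ p)
  (ltac:(by move: Hc; rewrite cP)).
set S := P `\ p in hb hB x1S.
set B := \sum_(x <- S) b x in hB.
case: hq => [w [hw0 [hw1 hwq]]].
have [x0 [x0S bx0 Hx0]] := argmin (fun x => w x / b x)
   (ltac:(by apply/hasP; exists x1) : has (fun x => 0 < b x) S).
have [x0p x0P] : x0 != p /\ x0 \in P by apply/fsetD1P.
pose t := w x0 / b x0.
have t0 : 0 <= t by rewrite /t divr_ge0 // ?hw0 // ltW.
pose w' := fun x : 'rV[R]_d => if x == p then (w p + t * B)%R else (w x - t * b x)%R.
have w'x0 : w' x0 = 0.
  by rewrite /w' (negbTE x0p) /t divfK ?subrr // gt_eqF.
have w'0 : forall x, x \in P -> 0 <= w' x.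
  move=> x xP; rewrite /w'; case: ifP => [_|/negbT xp].
    apply: addr_ge0; [exact: hw0 | exact: mulr_ge0].
  have xS : x \in S by apply/fsetD1P; split.
  rewrite subr_ge0; case: (ltP 0 (b x)) => bx.
    by rewrite -ler_pdivlMr //; apply: Hx0.
  apply: le_trans (hw0 _ xP).
  by rewrite mulr_ge0_le0.
have sumS : forall (V : lmodType R) (F : 'rV[R]_d -> V),
    \sum_(x <- S) w' x *: F x = \sum_(x <- S) w x *: F x - t *: \sum_(x <- S) b x *: F x.
  move=> V F; rewrite scaler_sumr -sumrB; apply: eq_big_seq => x xS.
  have [xp _] : x != p /\ x \in P by apply/fsetD1P.
  by rewrite /w' (negbTE xp) scalerBl scalerA.
have w'p : w' p = w p + t * B by rewrite /w' eqxx.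
have hbS : \sum_(x <- S) b x *: x = B *: p.
  apply/eqP; rewrite -subr_eq0 /B scaler_suml -sumrB; apply/eqP; rewrite -[RHS]hb.
  by apply: eq_bigr => x _; rewrite scalerBr.
have sum1 : \sum_(x <- P) w' x = 1.
  rewrite -hw1 (big_fsetD1 p) // (big_fsetD1 p (A:=P)) //.
  have -> : \sum_(x <- S) w' x = \sum_(x <- S) w x - t * B.
    rewrite /B mulr_sumr -sumrB; apply: eq_big_seq => x xS.
    have [xp _] : x != p /\ x \in P by apply/fsetD1P.
    by rewrite /w' (negbTE xp).
  rewrite w'p /=; ring.
have sumq : \sum_(x <- P) w' x *: x = q.
  rewrite hwq (big_fsetD1 p) // (big_fsetD1 p (A:=P)) //= -/S.
  rewrite (sumS _ id) hbS w'p scalerDl -addrA scalerA; congr (_ + _).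
  by rewrite addrC subrK.
pose P0 := P `\ x0.
have pP0 : p \in P0 by apply/fsetD1P; split => //; rewrite eq_sym.
have cP0 : (#|` P0| <= n)%N.
  have := cardfsD1 x0 P; rewrite x0P => H1.
  by move: Hn; rewrite H1 add1n ltnS.
have hq0 : in_conv_hull P0 q.
  exists w'; split; [|split].
  - by move=> x /fsetD1P [_ xP]; apply: w'0.
  - by rewrite -sum1 (big_fsetD1 x0 (A:=P)) //= w'x0 add0r.
  - by rewrite -{1}sumq (big_fsetD1 x0 (A:=P)) //= w'x0 scale0r add0r.
have [P' [sP' pP' cP' hP']] := IH P0 cP0 pP0 hq0.
exists P'; split => //.
by apply: fsubset_trans sP' (fsubsetDl _ _).
Qed.

Local Open Scope fset_scope.

Theorem mainTheorem8 (R : realFieldType) (d : nat) (hd : (1 <= d)%N)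
  (P Q : {fset 'rV[R]_d}) :
  ~ sep_1_inf P Q ->
  exists P' Q' : {fset 'rV[R]_d},
    P' `<=` P /\ Q' `<=` Q /\
    (#|` P'| + #|` Q'| <= 2 * d + 2)%N /\
    ~ sep_1_inf P' Q'.
Proof.
move=> hns.
have [q qQ hq] : exists2 q, q \in Q & in_conv_hull P q.
  apply: Classical_Prop.NNPP => H; apply: hns; left => q qQ hq; apply: H; by exists q.
have [p pP hp] : exists2 p, p \in P & in_conv_hull Q p.
  apply: Classical_Prop.NNPP => H; apply: hns; right => p pP hp; apply: H; by exists p.
have [P' [sP pP' cP hP]] := cara pP hq.
have [Q' [sQ qQ' cQ hQ]] := cara qQ hp.
exists P', Q'; split => //; split => //; split; first by lia.
by case => H; [apply: (H q) | apply: (H p)].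
Qed.
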